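(* For every $\alpha\in\Lambda$, the $*$-representation $\pi_\alpha$ of $W$ on $H_\alpha$ is irreducible.
   Context: Fix $d\ge 2$ and complex numbers $q_{ij}$, $1\le i\ne j\le d$, with $|q_{ij}|<1$ and $q_{ij}=\overline{q_{ji}}$. Let $W$ be the universal $C^*$-algebra generated by $s_1,\dots,s_d$ subject to $s_i^*s_i=I$ and $s_i^*s_j=q_{ij}s_js_i^*$ for $i\ne j$. Let $\Lambda_m=\{1,\dots,d\}^m$ ($\Lambda_0=\{\emptyset\}$), $\Lambda^0=\bigcup_m\Lambda_m$, $\Lambda=\{1,\dots,d\}^{\mathbb N}$; $s_\alpha=s_{\alpha_1}\cdots s_{\alpha_m}$, $s_\emptyset=I$. Shifts: $\sigma(\beta_1,\beta_2,\dots)=(\beta_2,\dots)$, $\sigma_j(\beta_1,\beta_2,\dots)=(j,\beta_1,\beta_2,\dots)$. $\beta\sim\alpha$ means $\sigma^m(\beta)=\sigma^n(\alpha)$ for some $m,n\ge0$. Fock representation: $\pi_F$ on $\mathcal F$ with unit vector $\Omega$, $\pi_F(s_j)^*\Omega=0$, and $\pi_F(s_\gamma)\Omega$, $\gamma\in\Lambda^0$, spanning a dense subspace. For $\gamma,\beta\in\Lambda_m$, $q(\gamma,\beta)=\langle\pi_F(s_\gamma)^*\pi_F(s_\beta)\Omega,\Omega\rangle$; for infinite $\gamma,\beta$, $q(\gamma,\beta)=\lim_m q((\gamma_1,\dots,\gamma_m),(\beta_1,\dots,\beta_m))$. $H_\alpha$ is the Hilbert space completion of the span of formal vectors $e_\beta$,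 $\beta\sim\alpha$, with respect to the positive form $(e_\beta,e_\gamma)=q(\gamma,\beta)$. The representation $\pi_\alpha$ of $W$ on $H_\alpha$ is given by $\pi_\alpha(s_j)e_\beta=e_{\sigma_j(\beta)}$, and $\pi_\alpha(s_j)^*e_\beta=0$ if $\beta$ does not contain $j$, $\pi_\alpha(s_j)^*e_\beta=q(j,\beta)e_{\beta\setminus j}$ otherwise, where for $\beta=(\beta'j\beta'')$ with $\beta'=(\beta'_1,\dots,\beta'_r)$ not containing $j$, $q(j,\beta)=q_{j\beta'_1}\cdots q_{j\beta'_r}$ and $\beta\setminus j=(\beta'\beta'')$. *)

(* Defs.v *)
From HB Require Import structures.
From mathcomp Require Import all_boot all_order all_algebra.
From mathcomp Require Import reals.
From mathcomp Require Export complex.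
Set Implicit Arguments. Unset Strict Implicit. Unset Printing Implicit Defensive.
Import Order.TTheory GRing.Theory Num.Theory.
Local Open Scope ring_scope.
Local Open Scope complex_scope.

Section Defs.
Variable R : realType.
Local Notation C := (R[i]).

(* generators s_1..s_d are indexed by 'I_d (0-based);
   finite words = seq 'I_d, infinite words (elements of Lambda) = nat -> 'I_d *)
Variable d : nat.
Definition iword := nat -> 'I_d.

Definition shift_in (j : 'I_d) (b : iword) : iword :=
  fun n => if n is n'.+1 then b n' else j.

Definition tail_equiv (b a : iword) : Prop :=
  exists m n : nat, forall k, b (k + m)%N = a (k + n)%N.

Definition prefix (m : nat) (b : iword) : seq 'I_d := mkseq b m.

Variable q : 'I_d -> 'I_d -> C.

(* Action of s_j^* on s_b Omega in the Fock representation, computed with the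
   relations s_j^* s_j = I, s_j^* s_k = q_jk s_k s_j^* (j<>k), s_j^* Omega = 0:
   s_j^* s_b Omega = c * s_{b \ j} Omega  (Some (c, b\j)), or 0 (None) if j
   does not occur in b; c = q_{j b'_1} ... q_{j b'_r}. *)
Fixpoint fock_adj (j : 'I_d) (b : seq 'I_d) : option (C * seq 'I_d) :=
  match b with
  | [::] => None
  | x :: b' =>
      if x == j then Some (1, b')
      else match fock_adj j b' with
           | None => None
           | Some (c, b'') => Some (q j x * c, x :: b'')
           end
  end.

(* qfin g b = < pi_F(s_g)^* pi_F(s_b) Omega, Omega > , where s_g^* = s_{g_m}^* ... s_{g_1}^* applied right to left *)
Fixpoint qfin (g b : seq 'I_d) : C :=
  match g with
  | [::] => if b is [::] then 1 else 0
  | j :: g' =>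
      match fock_adj j b with
      | None => 0
      | Some (c, b') => c * qfin g' b'
      end
  end.

Definition qinf_is (g b : iword) (z : C) : Prop :=
  forall eps : R, 0 < eps -> exists N : nat, forall m : nat, (N <= m)%N ->
    `| qfin (prefix m g) (prefix m b) - z | < eps%:C.

End Defs.

Record hilbert (R : realType) := Hilbert {
  hsp :> lmodType R[i];
  hinner : hsp -> hsp -> R[i];
  hinner_linl : forall (a : R[i]) (x y z : hsp),
      hinner (a *: x + y) z = a * hinner x z + hinner y z;
  hinner_herm : forall x y : hsp, hinner y x = (hinner x y)^*;
  hinner_ge0 : forall x : hsp, 0 <= hinner x x;
  hinner_def : forall x : hsp, hinner x x = 0 -> x = 0;
  (* completeness w.r.t. the norm ||x|| = sqrt <x,x> (stated with squares) *)
  hcomplete : forall u : nat -> hsp,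
      (forall e : R, 0 < e -> exists N : nat, forall m n : nat,
          (N <= m)%N -> (N <= n)%N -> complex.Re (hinner (u m - u n) (u m - u n)) < e) ->
      exists l : hsp, forall e : R, 0 < e -> exists N : nat, forall n : nat,
          (N <= n)%N -> complex.Re (hinner (u n - l) (u n - l)) < e
}.

Section HilbertDefs.
Variable R : realType.
Variable H : hilbert R.

Definition hnorm2 (x : H) : R := complex.Re (hinner x x).

Definition hlinear (T : H -> H) : Prop :=
  forall (a : R[i]) (x y : H), T (a *: x + y) = a *: T x + T y.

Definition hbounded (T : H -> H) : Prop :=
  exists c : R, forall x : H, hnorm2 (T x) <= c * hnorm2 x.

Definition hconverges (u : nat -> H) (l : H) : Prop :=
  forall e : R, 0 < e -> exists N : nat, forall n : nat,
    (N <= n)%N -> hnorm2 (u n - l) < e.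

Definition closed_subspace (M : H -> Prop) : Prop :=
  [/\ M 0,
      forall (a : R[i]) (x y : H), M x -> M y -> M (a *: x + y) &
      forall (u : nat -> H) (l : H), (forall n, M (u n)) -> hconverges u l -> M l].

Definition dense_span (I : Type) (P : I -> Prop) (v : I -> H) : Prop :=
  forall (x : H) (e : R), 0 < e ->
    exists (n : nat) (c : 'I_n -> R[i]) (b : 'I_n -> I),
      (forall k, P (b k)) /\ hnorm2 (x - \sum_(k < n) c k *: v (b k)) < e.
End HilbertDefs.

(* Main.v *)
Require Import Defs.
From HB Require Import structures.
From mathcomp Require Import all_boot all_order all_algebra.
From mathcomp Require Import reals complex.
From mathcomp Require Import zify ring lra.
From Stdlib Require Import Classical ClassicalEpsilon FunctionalExtensionality.
Import Order.TTheory GRing.Theory Num.Theory.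
Local Open Scope ring_scope.
Local Open Scope complex_scope.
Set Implicit Arguments. Unset Strict Implicit. Unset Printing Implicit Defensive.
Local Notation prefix := Defs.prefix.
Section Cm.
Variable R : realType.
Definition cm (z : R[i]) : R := complex.Re `|z|.

Lemma cmE z : `|z| = (cm z)%:C.
Proof. by rewrite /cm RRe_real // normr_real. Qed.

Lemma cm_ge0 z : 0 <= cm z.
Proof. by have := normr_ge0 z; rewrite cmE ler0c. Qed.

Lemma cmM z w : cm (z * w) = cm z * cm w.
Proof. by apply: complexI; rewrite rmorphM /= -!cmE normrM. Qed.

Lemma cmD z w : cm (z + w) <= cm z + cm w.
Proof. by rewrite -lecR rmorphD /= -!cmE ler_normD. Qed.

Lemma cmN z : cm (- z) = cm z.
Proof. by rewrite /cm normrN. Qed.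

Lemma cmB z w : cm (z - w) = cm (w - z).
Proof. by rewrite -cmN opprB. Qed.

Lemma cm0 : cm 0 = 0.
Proof. by rewrite /cm normr0. Qed.

Lemma cm1 : cm 1 = 1.
Proof. by rewrite /cm normr1. Qed.

Lemma cm_eq0 z : (cm z == 0) = (z == 0).
Proof.
apply/idP/idP => [/eqP h|/eqP->]; last by rewrite cm0.
by rewrite -normr_eq0 cmE h.
Qed.

Lemma cmJ z : cm (z^*) = cm z.
Proof. by rewrite /cm; have -> : `|z^*| = `|z| := normcJ z. Qed.

Lemma cmR (r : R) : cm r%:C = `|r|.
Proof. by rewrite /cm normc_def /= expr0n /= addr0 sqrtr_sqr. Qed.

Lemma cm_sq z : ((cm z) ^+ 2)%:C = z * z^*.
Proof. by rewrite rmorphXn /= -cmE; exact: normCK. Qed.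

Lemma ltc_cm z (e : R) : (`|z| < e%:C) = (cm z < e).
Proof. by rewrite cmE ltcR. Qed.

End Cm.

Section Hil.
Variable R : realType.
Variable H : hilbert R.
Implicit Types (x y z : H) (a : R[i]).
Local Notation ip := (@hinner R H).
Local Notation n := (@hnorm2 R H).

Lemma conjE (w : R[i]) : Num.conj w = w^*. Proof. by []. Qed.

Lemma ip0l z : ip 0 z = 0.
Proof.
have := hinner_linl 1 (0 : H) 0 z; rewrite scale1r addr0 mul1r.
by move/(congr1 (fun t => t - ip 0 z)); rewrite subrr addrK.
Qed.

Lemma ipDl x y z : ip (x + y) z = ip x z + ip y z.
Proof. by have := hinner_linl 1 x y z; rewrite scale1r mul1r. Qed.

Lemma ipZl a x z : ip (a *: x) z = a * ip x z.
Proof. by have := hinner_linl a x 0 z; rewrite addr0 ip0l addr0. Qed.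

Lemma ipNl x z : ip (- x) z = - ip x z.
Proof. by rewrite -scaleN1r ipZl mulN1r. Qed.

Lemma ipBl x y z : ip (x - y) z = ip x z - ip y z.
Proof. by rewrite ipDl ipNl. Qed.

Lemma ipC x y : ip x y = (ip y x)^*.
Proof. by rewrite hinner_herm. Qed.

Lemma ip0r z : ip z 0 = 0.
Proof. by rewrite ipC ip0l conjc0. Qed.

Lemma ipDr x y z : ip z (x + y) = ip z x + ip z y.
Proof. by rewrite ipC ipDl rmorphD /= -!ipC. Qed.

Lemma ipZr a x z : ip z (a *: x) = a^* * ip z x.
Proof. by rewrite ipC ipZl rmorphM /= -ipC. Qed.

Lemma ipNr x z : ip z (- x) = - ip z x.
Proof. by rewrite -scaleN1r ipZr rmorphN rmorph1 mulN1r. Qed.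

Lemma ipBr x y z : ip z (x - y) = ip z x - ip z y.
Proof. by rewrite ipDr ipNr. Qed.

Lemma ip_self x : ip x x = (n x)%:C.
Proof.
rewrite /hnorm2 RRe_real //; apply: ger0_real; exact: hinner_ge0.
Qed.

Lemma n_ge0 x : 0 <= n x.
Proof. by rewrite -ler0c -ip_self; exact: hinner_ge0. Qed.

Lemma n_eq0 x : n x = 0 -> x = 0.
Proof. by move=> h; apply: hinner_def; rewrite ip_self h. Qed.

Lemma n0 : n 0 = 0.
Proof. by rewrite /hnorm2 ip0l. Qed.

Lemma nZ a x : n (a *: x) = cm a ^+ 2 * n x.
Proof.
apply: complexI; rewrite -ip_self ipZl ipZr mulrA rmorphM /= cm_sq ip_self.
by rewrite (mulrC a).
Qed.

Lemma nN x : n (- x) = n x.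
Proof. by rewrite -scaleN1r nZ cmN cm1 expr1n mul1r. Qed.

Lemma nB x y : n (x - y) = n (y - x).
Proof. by rewrite -nN opprB. Qed.

Lemma nDB x y : n (x + y) + n (x - y) = 2 * n x + 2 * n y.
Proof.
apply: complexI; rewrite rmorphD /= -!ip_self rmorphD /= !rmorphM /= -!ip_self.
rewrite !ipDl !ipDr !ipNl !ipNr.
rewrite rmorph_nat.
ring.
Qed.

Lemma nD x y : n (x + y) <= 2 * n x + 2 * n y.
Proof. by rewrite -nDB lerDl n_ge0. Qed.

Lemma CS x y : cm (ip x y) ^+ 2 <= n x * n y.
Proof.
have [y0|ny0] := eqVneq (n y) 0.
  by rewrite (n_eq0 y0) ip0r cm0 expr0n /= n0 mulr0.
have nyp : 0 < n y by rewrite lt_def ny0 n_ge0.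
set p := ip x y.
set N := ip y y.
set t := p / N.
have nz : N != 0.
  by apply: contra ny0 => /eqP h; apply/eqP; apply: complexI; rewrite -ip_self.
have hc : N^* = N by rewrite -ipC.
have h : ip (x - t *: y) (x - t *: y) = (n x)%:C - p * p^* / N.
  rewrite ipBl !ipBr !ipZl !ipZr (ipC y x) -/p -/N -ip_self.
  rewrite /t rmorphM /= fmorphV /= !conjE hc.
  by field.
have h2 : n (x - t *: y) = n x - cm p ^+ 2 / n y.
  apply: complexI; rewrite -ip_self h rmorphB /= rmorphM /= fmorphV /= cm_sq /N ip_self //.
by have := n_ge0 (x - t *: y); rewrite h2 subr_ge0 ler_pdivrMr.
Qed.

End Hil.
Section Dense.
Variable R : realType.
Variable H : hilbert R.
Local Notation ip := (@hinner R H).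
Local Notation n := (@hnorm2 R H).

Lemma le0_eps (a : R) : (forall eps : R, 0 < eps -> a <= eps) -> a <= 0.
Proof. by move=> h; apply/ler_addgt0Pr => e e0; rewrite add0r; exact: h. Qed.

Lemma n_small0 (x : H) : (forall eps : R, 0 < eps -> n x <= eps) -> x = 0.
Proof.
move=> h; apply: n_eq0; apply/eqP; rewrite eq_le n_ge0 andbT; exact: le0_eps.
Qed.

Lemma ip_sumr (x : H) m (f : 'I_m -> H) :
  ip x (\sum_(k < m) f k) = \sum_(k < m) ip x (f k).
Proof.
apply: (big_rec2 (fun a b => ip x a = b)); first by rewrite ip0r.
by move=> i a b _ <-; rewrite ipDr.
Qed.

Lemma ip_suml (x : H) m (f : 'I_m -> H) :
  ip (\sum_(k < m) f k) x = \sum_(k < m) ip (f k) x.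
Proof.
apply: (big_rec2 (fun a b => ip a x = b)); first by rewrite ip0l.
by move=> i a b _ <-; rewrite ipDl.
Qed.

Lemma cm_real (r : R) : 0 <= r -> cm r%:C = r.
Proof. by move=> h; rewrite cmR ger0_norm. Qed.

Variables (I : Type) (P : I -> Prop) (v : I -> H).
Hypothesis hd : dense_span P v.

Lemma dense_orth (x : H) : (forall i, P i -> ip x (v i) = 0) -> x = 0.
Proof.
move=> h; apply: n_small0 => eps e0.
have [m [c [b [Pb hz]]]] := hd x e0.
set z := \sum_(k < m) c k *: v (b k) in hz.
have hxz : ip x z = 0.
  rewrite ip_sumr; apply: big1 => k _; by rewrite ipZr h // mulr0.
have hcs := CS x (x - z).
rewrite ipBr hxz subr0 ip_self cm_real ?n_ge0 // in hcs.
have [nx0|nxp] := eqVneq (n x) 0; first by rewrite nx0 ltW.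
have nxp' : 0 < n x by rewrite lt_def nxp n_ge0.
rewrite expr2 ler_pM2l // in hcs.
exact: (le_trans hcs (ltW hz)).
Qed.

Lemma dense_orth' (x : H) : (forall i, P i -> ip (v i) x = 0) -> x = 0.
Proof.
move=> h; apply: dense_orth => i Pi; by rewrite ipC h // conjc0.
Qed.

Definition hadd (A : H -> H) := forall (a : R[i]) (x y : H), A (a *: x + y) = a *: A x + A y.

Lemma hadd0 A : hadd A -> A 0 = 0.
Proof.
move=> hA; have := hA 1 0 0; rewrite !scale1r addr0.
by move/(congr1 (fun t => t - A 0)); rewrite subrr addrK.
Qed.

Lemma haddD A x y : hadd A -> A (x + y) = A x + A y.
Proof. by move=> hA; have := hA 1 x y; rewrite !scale1r. Qed.

Lemma haddZ A a x : hadd A -> A (a *: x) = a *: A x.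
Proof. by move=> hA; have := hA a x 0; rewrite !addr0 hadd0 // addr0. Qed.

Lemma haddN A x : hadd A -> A (- x) = - A x.
Proof. by move=> hA; rewrite -scaleN1r haddZ // scaleN1r. Qed.

Lemma haddB A x y : hadd A -> A (x - y) = A x - A y.
Proof. by move=> hA; rewrite haddD // haddN. Qed.

Lemma hadd_sum A m (f : 'I_m -> H) : hadd A ->
  A (\sum_(k < m) f k) = \sum_(k < m) A (f k).
Proof.
move=> hA; apply: (big_rec2 (fun a b => A a = b)); first exact: hadd0.
by move=> i a b _ <-; rewrite haddD.
Qed.

Lemma dense_bounded0 (A : H -> H) (C : R) : hadd A ->
  (forall x, n (A x) <= C * n x) -> (forall i, P i -> A (v i) = 0) ->
  forall x, A x = 0.
Proof.
move=> hA hC hv x; apply: n_small0 => eps e0.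
have Cp : 0 < `|C| + 1 by rewrite ltr_pwDr // normr_ge0.
have e1 : 0 < eps / (`|C| + 1) by rewrite divr_gt0.
have [m [c [b [Pb hz]]]] := hd x e1.
set z := \sum_(k < m) c k *: v (b k) in hz.
have Az : A z = 0.
  by rewrite hadd_sum //; apply: big1 => k _; rewrite haddZ // hv // scaler0.
have -> : A x = A (x - z) by rewrite haddB // Az subr0.
apply: (le_trans (hC _)).
apply: (le_trans (y := `|C| * n (x - z))).
  by rewrite ler_wpM2r ?n_ge0 // ler_norm.
have := ltW hz; rewrite ler_pdivlMr // => h.
apply: (le_trans _ h); rewrite mulrC ler_wpM2l ?n_ge0 // lerDl //.
Qed.

Definition in_span (M : H -> Prop) := forall m (c : 'I_m -> R[i]) (b : 'I_m -> I),
  (forall k, P (b k)) -> M (\sum_(k < m) c k *: v (b k)).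

Lemma closed_span (M : H -> Prop) : closed_subspace M ->
  (forall i, P i -> M (v i)) -> in_span M.
Proof.
case=> M0 Mlin _ hv m c b Pb.
apply: (big_rec (fun a => M a)) => // k a _ Ma.
by have := Mlin (c k) _ _ (hv _ (Pb k)) Ma.
Qed.

Lemma closed_all (M : H -> Prop) : closed_subspace M ->
  (forall i, P i -> M (v i)) -> forall x, M x.
Proof.
move=> cM hv x.
have hs := closed_span cM hv.
have ex : forall N : nat, exists z, M z /\ n (x - z) < 2 ^- N.
  move=> N.
  have e0 : 0 < (2 : R) ^- N by rewrite invr_gt0 exprn_gt0.
  have [m [c [b [Pb hz]]]] := hd x e0.
  by exists (\sum_(k < m) c k *: v (b k)); split => //; exact: hs.
pose u N := proj1_sig (constructive_indefinite_description _ (ex N)).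
have hu N : M (u N) /\ n (x - u N) < 2 ^- N.
  exact: (proj2_sig (constructive_indefinite_description _ (ex N))).
case: cM => _ _ cl; apply: (cl u) => [N|e e0]; first by case: (hu N).
exists (Num.bound e^-1) => N hN.
rewrite nB; apply: (lt_trans (proj2 (hu N))).
exact: realalg.RealAlg.upper_nthrootVP.
Qed.

End Dense.
Section Comb.
Variable R : realType.
Variable d : nat.
Variable q : 'I_d -> 'I_d -> R[i].
Local Notation iw := (iword d).

Definition sh1 (w : iw) : iw := fun k => w k.+1.

Lemma prefixS L (w : iw) : prefix L.+1 w = w 0%N :: prefix L (sh1 w).
Proof. by rewrite /prefix /mkseq /= (iotaDl 1 0) -map_comp. Qed.

Definition del (p : nat) (w : iw) : iw := fun k => if (k < p)%N then w k else w k.+1.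
Definition occ (j : 'I_d) (w : iw) := exists k, w k == j.
Definition fpos j w : nat :=
  match excluded_middle_informative (occ j w) with
  | left h => ex_minn h | right _ => 0%N end.
Definition isfirst j (w : iw) p := w p = j /\ forall k, (k < p)%N -> w k != j.

Lemma fpos_spec j w : occ j w -> isfirst j w (fpos j w).
Proof.
rewrite /fpos; case: excluded_middle_informative => // h _.
case: ex_minnP => p /eqP wp hmin; split => // k kp.
apply/negP => /eqP wk; have := hmin k; rewrite wk eqxx => /(_ isT).
by rewrite leqNgt kp.
Qed.

Lemma isfirst_uniq j w p p' : isfirst j w p -> isfirst j w p' -> p = p'.
Proof.
move=> [h1 h2] [h1' h2']; case: (ltngtP p p') => // hp.
  by move: (h2' _ hp); rewrite h1 eqxx.
by move: (h2 _ hp); rewrite h1' eqxx.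
Qed.

Lemma isfirst_fpos j w p : isfirst j w p -> occ j w /\ fpos j w = p.
Proof.
move=> h; have o : occ j w by exists p; rewrite (proj1 h).
by split => //; apply: isfirst_uniq (fpos_spec o) h.
Qed.

Definition coef j w := \prod_(k < fpos j w) q j (w k).

Lemma fock_some j p : forall L w, isfirst j w p -> (p < L)%N ->
  fock_adj q j (prefix L w) = Some (\prod_(k < p) q j (w k), prefix L.-1 (del p w)).
Proof.
elim: p => [|p IH] [|L] w [wp hw] // hL.
  rewrite prefixS /= wp eqxx big_ord0.
  have -> : del 0 w = sh1 w by apply: functional_extensionality.
  by [].
rewrite prefixS /=; have w0 : (w 0%N == j) = false by apply/negbTE/hw.
rewrite w0 (IH L (sh1 w)) //; last first.
  by split => // k kp; apply: hw.
rewrite big_ord_recl; congr (Some (_, _)).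
case: L hL => [|L] hL //; rewrite [prefix L.+1 _]prefixS.
have -> : sh1 (del p.+1 w) = del p (sh1 w) by apply: functional_extensionality.
by [].
Qed.

Lemma fock_none j L : forall w, (forall k, (k < L)%N -> w k != j) ->
  fock_adj q j (prefix L w) = None.
Proof.
elim: L => [|L IH] w hw //.
rewrite prefixS /=; have w0 : (w 0%N == j) = false by apply/negbTE/hw.
by rewrite w0 IH // => k kL; apply: hw.
Qed.

Lemma qfin_cons j g b : qfin q (j :: g) b =
  match fock_adj q j b with None => 0 | Some (c, b') => c * qfin q g b' end.
Proof. by []. Qed.

Lemma qfin_same m : forall w, qfin q (prefix m w) (prefix m w) = 1.
Proof.
elim: m => [|m IH] w //.
by rewrite prefixS /= eqxx mul1r IH.
Qed.

Definition adj1 j (w : iw) : option (R[i] * iw) :=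
  match excluded_middle_informative (occ j w) with
  | left _ => Some (coef j w, del (fpos j w) w)
  | right _ => None end.

Fixpoint st (b g : iw) (n : nat) : option (R[i] * iw) :=
  match n with
  | 0%N => Some (1, g)
  | n'.+1 => match st b g n' with
             | Some (c, w) => match adj1 (b n') w with
                              | Some (c', w') => Some (c * c', w')
                              | None => None end
             | None => None end
  end.

Definition cf b g n := match st b g n with Some (c, _) => c | None => 0 end.
Definition Pk b g i := match st b g i with Some (_, w) => fpos (b i) w | None => 0%N end.
Definition fits b g k m := all (fun i => Pk b g i < m - i)%N (iota 0 k).

Lemma fitsS b g k m : fits b g k.+1 m = fits b g k m && (Pk b g k < m - k)%N.
Proof. by rewrite /fits -addn1 iotaD all_cat /= andbT. Qed.

Lemma drop_prefix (b : iw) k m : (k < m)%N ->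
  drop k (prefix m b) = b k :: drop k.+1 (prefix m b).
Proof.
move=> km; rewrite (drop_nth (b 0%N)) ?size_mkseq // nth_mkseq //.
Qed.

Lemma qfin_st b g m k : (k <= m)%N ->
  qfin q (prefix m b) (prefix m g) =
  match st b g k with
  | Some (c, w) => if fits b g k m then c * qfin q (drop k (prefix m b)) (prefix (m - k) w) else 0
  | None => 0 end.
Proof.
elim: k => [|k IH] km.
  have -> : st b g 0 = Some (1, g) by [].
  have -> : fits b g 0 m = true by [].
  by rewrite drop0 subn0 mul1r.
have -> : st b g k.+1 = match st b g k with
             | Some (c, w) => match adj1 (b k) w with
                              | Some (c', w') => Some (c * c', w')
                              | None => None end
             | None => None end by [].
rewrite (IH (ltnW km)) fitsS /Pk.
case: (st b g k) => [[c w]|]; last by [].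
set j := b k.
case: (fits b g k m); last first.
  by case: (adj1 j w) => [[c' w']|].
rewrite (drop_prefix _ km) /adj1.
case: excluded_middle_informative => [o|no].
  have [wp hw] := fpos_spec o.
  case: (ltnP (fpos j w) (m - k)) => hp.
    rewrite /qfin -/qfin (fock_some (conj wp hw) hp) -subnS mulrA.
    by rewrite /coef.
  rewrite /qfin -/qfin fock_none ?mulr0 // => k' hk'; apply: hw.
  exact: (leq_trans hk' hp).
rewrite /qfin -/qfin fock_none ?mulr0 // => k' _; apply/negP => /eqP h; apply: no.
by exists k'; rewrite h.
Qed.

Lemma qfin_cf b g m :
  qfin q (prefix m b) (prefix m g) = if fits b g m m then cf b g m else 0.
Proof.
rewrite (qfin_st b g (leqnn m)) /cf.
case: (st b g m) => [[c w]|]; last by case: (fits b g m m).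
by rewrite drop_oversize ?size_mkseq // subnn mulr1.
Qed.

End Comb.
Section Analysis.
Variable R : realType.

Definition cvgc (u : nat -> R[i]) (z : R[i]) :=
  forall eps : R, 0 < eps -> exists N, forall m, (N <= m)%N -> cm (u m - z) < eps.

Lemma mono_nat (S : nat -> nat) : (forall n, (S n <= S n.+1)%N) ->
  forall m n, (m <= n)%N -> (S m <= S n)%N.
Proof.
move=> h m n mn; rewrite -(subnKC mn); elim: (n - m)%N => [|k IH]; first by rewrite addn0.
by rewrite addnS (leq_trans IH (h _)).
Qed.

Lemma ev_const (S : nat -> nat) K : (forall n, (S n <= S n.+1)%N) ->
  (forall n, (S n <= K)%N) -> exists N, forall n, (N <= n)%N -> S n = S N.
Proof.
move=> hm hK.
suff: forall j N0, (K - S N0 <= j)%N -> exists N, forall n, (N <= n)%N -> S n = S N.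
  by move/(_ (K - S 0%N)%N 0%N (leqnn _)).
elim=> [|j IH] N0 hj.
  exists N0 => n hn; have := mono_nat hm hn; have := hK n; move: hj; lia.
case: (classic (forall n, (N0 <= n)%N -> S n = S N0)) => [h|h]; first by exists N0.
have [n [hn hne]] : exists n, (N0 <= n)%N /\ S n <> S N0.
  apply: NNPP => hh; apply: h => n hn; apply: NNPP => hne; apply: hh; by exists n.
apply: (IH n); have lt : (S N0 < S n)%N.
  by rewrite ltn_neqAle mono_nat // andbT; apply/eqP => e; apply: hne.
have := hK n; move: hj; lia.
Qed.

Lemma bernoulli (x : R) n : 0 <= x -> 1 + n%:R * x <= (1 + x) ^+ n.
Proof.
move=> x0; elim: n => [|n IH]; first by rewrite mul0r addr0 expr0.
rewrite exprS -natr1 mulrDl mul1r.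
have h1 : 0 <= (1 + x) by rewrite addr_ge0.
have h2 : 0 <= n%:R * x by rewrite mulr_ge0.
nra.
Qed.

Lemma pow_small (r L : R) : 0 <= r -> r < 1 -> 0 < L -> exists K, r ^+ K < L.
Proof.
move=> r0 r1 L0; have [->|rn0] := eqVneq r 0; first by exists 1%N; rewrite expr1.
have rp : 0 < r by rewrite lt_def rn0.
set t := r^-1 - 1.
have tp : 0 < t by rewrite subr_gt0 invf_gt1.
set n := (Num.bound (L * t)^-1).+1.
exists n.
have hb := bernoulli n (ltW tp).
have e : (1 + t) = r^-1 by rewrite /t addrC subrK.
rewrite e in hb.
have hn : (L * t)^-1 < n%:R.
  apply: (lt_trans (archi_boundP _)); first by rewrite invr_ge0 mulr_ge0 // ltW.
  by rewrite ltr_nat.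
rewrite -div1r ltr_pdivrMr ?mulr_gt0 // in hn.
set A := r^-1 ^+ n in hb.
have hA : r ^+ n = A^-1 by rewrite /A exprVn invrK.
have Ap : 0 < A by rewrite /A exprn_gt0 // invr_gt0.
rewrite hA -div1r ltr_pdivrMr //.
have n0 : 0 <= (n%:R : R) by [].
nra.
Qed.

End Analysis.
Section CfBounds.
Variable R : realType.
Variable d : nat.
Variable q : 'I_d -> 'I_d -> R[i].
Variable r : R.
Hypothesis r0 : 0 <= r.
Hypothesis r1 : r < 1.
Hypothesis hr : forall i j, i != j -> cm (q i j) <= r.
Local Notation iw := (iword d).

Lemma cm_prod m (F : 'I_m -> R[i]) : cm (\prod_(k < m) F k) = \prod_(k < m) cm (F k).
Proof.
apply: (big_rec2 (fun a b => cm a = b)); first exact: cm1.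
by move=> i a b _ <-; rewrite cmM.
Qed.

Lemma cm_coef j (w : iw) : cm (coef q j w) <= r ^+ fpos j w.
Proof.
rewrite /coef cm_prod.
case: (classic (occ j w)) => [o|no].
  have [_ hw] := fpos_spec o.
  have -> : r ^+ fpos j w = \prod_(k < fpos j w) r by rewrite prodr_const card_ord.
  apply: ler_prod => k _; rewrite cm_ge0 /=; apply: hr; rewrite eq_sym; exact: hw.
rewrite /fpos; case: excluded_middle_informative => // _.
by rewrite big_ord0 expr0.
Qed.

Lemma cf_S b g n : cm (cf q b g n.+1) <= cm (cf q b g n) * r ^+ Pk q b g n.
Proof.
rewrite /cf /Pk /=.
case: (st q b g n) => [[c w]|]; last by rewrite cm0 mul0r.
rewrite /adj1; case: excluded_middle_informative => _; last by rewrite cm0 mulr_ge0 ?cm_ge0 ?exprn_ge0.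
by rewrite cmM ler_wpM2l ?cm_ge0 // cm_coef.
Qed.

Lemma cf_pow b g n : cm (cf q b g n) <= r ^+ (\sum_(i < n) Pk q b g i).
Proof.
elim: n => [|n IH]; first by rewrite big_ord0 /cf /= cm1 expr0.
apply: (le_trans (cf_S b g n)); rewrite big_ord_recr /= exprD.
by rewrite ler_wpM2r ?exprn_ge0.
Qed.

Lemma cf_le1 b g n : cm (cf q b g n) <= 1.
Proof. by apply: (le_trans (cf_pow b g n)); rewrite exprn_ile1 // ltW. Qed.

Lemma cf_mono b g n : cm (cf q b g n.+1) <= cm (cf q b g n).
Proof.
apply: (le_trans (cf_S b g n)); rewrite ler_piMr ?cm_ge0 // exprn_ile1 // ltW //.
Qed.

Lemma cf_mono' b g m n : (m <= n)%N -> cm (cf q b g n) <= cm (cf q b g m).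
Proof.
move=> mn; rewrite -(subnKC mn); elim: (n - m)%N => [|k IH]; first by rewrite addn0.
by rewrite addnS (le_trans (cf_mono _ _ _) IH).
Qed.

Lemma cm_qfin_le b g m : cm (qfin q (prefix m b) (prefix m g)) <= cm (cf q b g m).
Proof. by rewrite qfin_cf; case: ifP => _ //; rewrite cm0 cm_ge0. Qed.

Lemma main_cf b g Qv : cvgc (fun m => qfin q (prefix m b) (prefix m g)) Qv ->
  forall eps, 0 < eps -> exists N, forall n, (N <= n)%N ->
    cm (cf q b g n) ^+ 2 < cm Qv ^+ 2 + eps.
Proof.
move=> hc eps e0.
case: (classic (exists L, 0 < L /\ forall n, L <= cm (cf q b g n))) => [[L [L0 hL]]|hno].
  have [K hK] := pow_small r0 r1 L0.
  pose S n := (\sum_(i < n) Pk q b g i)%N.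
  have hSK n : (S n < K)%N.
    rewrite ltnNge; apply/negP => h.
    have h1 := le_trans (hL n) (cf_pow b g n).
    have h2 : r ^+ S n <= r ^+ K := ler_wiXn2l r0 (ltW r1) h.
    have := lt_le_trans hK (le_trans h1 h2); by rewrite ltxx.
  have hSm n : (S n <= S n.+1)%N by rewrite /S big_ord_recr /= leq_addr.
  have [N0 hN0] := ev_const hSm (fun n => ltnW (hSK n)).
  have hP0 n : (N0 <= n)%N -> Pk q b g n = 0%N.
    move=> hn; have e1 := hN0 n hn; have e2 := hN0 n.+1 (leqW hn).
    move: e1 e2; rewrite /S big_ord_recr /=; lia.
  have hPK n : (Pk q b g n < K)%N.
    have := hSK n.+1; rewrite /S big_ord_recr /=; lia.
  have hfits m : (N0 + K <= m)%N -> fits q b g m m.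
    move=> hm; apply/allP => i; rewrite mem_iota add0n => /andP [_ im].
    case: (ltnP i N0) => hi; first by have := hPK i; lia.
    by rewrite hP0 //; lia.
  have e4 : 0 < eps / 4 by rewrite divr_gt0.
  have m0 : 0 < Num.min 1 (eps / 4) by rewrite lt_min ltr01 e4.
  have [N1 hN1] := hc _ m0.
  exists (N0 + K + N1)%N => n hn.
  have e1 : qfin q (prefix n b) (prefix n g) = cf q b g n.
    by rewrite qfin_cf hfits //; lia.
  have := hN1 n (leq_trans (leq_addl _ _) hn); rewrite e1 lt_min => /andP [t1 t2].
  have ha0 := cm_ge0 (cf q b g n); have ha1 := cf_le1 b g n.
  have hb0 := cm_ge0 Qv.
  have tri1 : cm (cf q b g n) <= cm (cf q b g n - Qv) + cm Qv.
    by have := cmD (cf q b g n - Qv) Qv; rewrite subrK.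
  have tri2 : cm Qv <= cm (cf q b g n) + cm (cf q b g n - Qv).
    by have := cmD (cf q b g n) (- (cf q b g n - Qv)); rewrite cmN opprB addrC subrK.
  nra.
have hno' : forall L, 0 < L -> exists n, cm (cf q b g n) < L.
  move=> L L0; apply: NNPP => h; apply: hno; exists L; split => // n.
  rewrite leNgt; apply/negP => hn; apply: h; by exists n.
have Q0 : cm Qv = 0.
  apply/eqP; rewrite eq_le cm_ge0 andbT; apply: le0_eps => e e0'.
  have e2 : 0 < e / 2 by rewrite divr_gt0.
  have [n0 hn0] := hno' _ e2.
  have [N1 hN1] := hc _ e2.
  have h1 := hN1 (n0 + N1)%N (leq_addl _ _).
  have h2 := le_trans (cm_qfin_le b g (n0 + N1)) (cf_mono' b g (leq_addr N1 n0)).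
  have h3 := cmD (Qv - qfin q (prefix (n0 + N1) b) (prefix (n0 + N1) g))
                (qfin q (prefix (n0 + N1) b) (prefix (n0 + N1) g)).
  rewrite subrK cmB in h3.
  apply: (le_trans h3); rewrite [e]splitr; apply: lerD; first exact: ltW.
  exact: ltW (le_lt_trans h2 hn0).
have [n0 hn0] := hno' _ e0.
exists n0 => n hn; rewrite Q0 expr0n /= add0r.
have h1 := le_lt_trans (cf_mono' b g hn) hn0.
have ha0 := cm_ge0 (cf q b g n); have ha1 := cf_le1 b g n.
nra.
Qed.

End CfBounds.
Section CvgLemmas.
Variable R : realType.
Implicit Types (u v : nat -> R[i]) (z : R[i]).

Lemma cvgc_uniq u z z' : cvgc u z -> cvgc u z' -> z = z'.
Proof.
move=> h1 h2; apply/eqP; rewrite -subr_eq0 -cm_eq0 eq_le cm_ge0 andbT.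
apply: le0_eps => e e0; have e2 : 0 < e / 2 by rewrite divr_gt0.
have [N1 hN1] := h1 _ e2; have [N2 hN2] := h2 _ e2.
have a1 := hN1 (N1 + N2)%N (leq_addr _ _); have a2 := hN2 (N1 + N2)%N (leq_addl _ _).
have := cmD (z - u (N1 + N2)%N) (u (N1 + N2)%N - z').
rewrite addrA subrK cmB => h; apply: (le_trans h).
rewrite [e]splitr; apply: lerD; apply: ltW => //; by rewrite cmB.
Qed.

Lemma cvgc_shift u z : cvgc u z -> cvgc (fun m => u m.+1) z.
Proof. by move=> h e e0; have [N hN] := h e e0; exists N => m hm; apply: hN; lia. Qed.

Lemma cvgc_ev u v z : cvgc u z -> (exists N, forall m, (N <= m)%N -> v m = u m) -> cvgc v z.
Proof.
move=> h [N0 h0] e e0; have [N hN] := h e e0; exists (N + N0)%N => m hm.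
rewrite h0; [apply: hN|]; lia.
Qed.

Lemma cvgc_scale u z c : cvgc u z -> cvgc (fun m => c * u m) (c * z).
Proof.
move=> h e e0; have cp : 0 < cm c + 1 by rewrite ltr_pwDr // cm_ge0.
have [N hN] := h (e / (cm c + 1)) (divr_gt0 e0 cp).
exists N => m hm; rewrite -mulrBr cmM.
have := hN m hm; rewrite ltr_pdivlMr // => h1.
apply: (le_lt_trans _ h1); rewrite mulrC ler_wpM2l ?cm_ge0 // lerDl //.
Qed.

Lemma cvgc_const z : cvgc (fun _ => z) z.
Proof. by move=> e e0; exists 0%N => m _; rewrite subrr cm0. Qed.

Lemma qinf_cvgc d (q : 'I_d -> 'I_d -> R[i]) g b z :
  qinf_is q g b z -> cvgc (fun m => qfin q (prefix m g) (prefix m b)) z.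
Proof. by move=> h e e0; have [N hN] := h e e0; exists N => m hm; rewrite -ltc_cm hN. Qed.

End CvgLemmas.
Section Main.
Variable R : realType.
Variable d : nat.
Variable q : 'I_d -> 'I_d -> R[i].
Variable alpha : iword d.
Variable Q : iword d -> iword d -> R[i].
Hypothesis hQ : forall g b : iword d, tail_equiv g alpha -> tail_equiv b alpha ->
          qinf_is q g b (Q g b).
Variable H : hilbert R.
Variable e : iword d -> H.
Hypothesis he_inner : forall g b : iword d, tail_equiv g alpha -> tail_equiv b alpha ->
          hinner (e b) (e g) = Q g b.
Hypothesis he_dense : dense_span (fun b => tail_equiv b alpha) e.
Variables S S' : 'I_d -> H -> H.
Hypothesis hS_lin : forall j, hlinear (S j).
Hypothesis hS_bd : forall j, hbounded (S j).
Hypothesis hS_e : forall j (b : iword d), tail_equiv b alpha -> S j (e b) = e (shift_in j b).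
Hypothesis hS'_adj : forall j (x y : H), hinner (S' j x) y = hinner x (S j y).

Local Notation ip := (@hinner R H).
Local Notation n := (@hnorm2 R H).
Local Notation P b := (tail_equiv b alpha).
Local Notation iw := (iword d).

Lemma te_shift_in j b : P b -> P (shift_in j b).
Proof. by case=> m [n0 h]; exists m.+1, n0 => k; rewrite addnS /= h. Qed.

Lemma te_del p b : P b -> P (del p b).
Proof.
case=> m [n0 h]; exists (m + p)%N, (n0 + p).+1 => k.
rewrite /del; have -> : (k + (m + p) < p)%N = false by lia.
have -> : (k + (m + p)).+1 = ((k + p).+1 + m)%N by lia.
by rewrite h; congr alpha; lia.
Qed.

Definition shn (k : nat) (b : iw) : iw := fun i => b (k + i)%N.

Lemma te_shn k b : P b -> P (shn k b).
Proof.
case=> m [n0 h]; exists m, (n0 + k)%N => i.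
rewrite /shn; have -> : (k + (i + m))%N = ((k + i) + m)%N by lia.
by rewrite h; congr alpha; lia.
Qed.

Lemma n_e b : P b -> n (e b) = 1.
Proof.
move=> Pb; apply: complexI; rewrite -ip_self he_inner //.
apply: (cvgc_uniq (qinf_cvgc (hQ Pb Pb))).
apply: (cvgc_ev (cvgc_const (1 : R[i]))); exists 0%N => m _.
exact: qfin_same.
Qed.

Lemma Qstep j g b : P g -> P b ->
  Q (shift_in j g) b = match adj1 q j b with Some (c, w) => c * Q g w | None => 0 end.
Proof.
move=> Pg Pb; have h1 := cvgc_shift (qinf_cvgc (hQ (te_shift_in j Pg) Pb)).
rewrite /adj1; case: excluded_middle_informative => [o|no].
  have Pw := te_del (fpos j b) Pb.
  have h2 := cvgc_scale (coef q j b) (qinf_cvgc (hQ Pg Pw)).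
  apply: (cvgc_uniq h1); apply: (cvgc_ev h2); exists (fpos j b).+1 => m hm.
  have [wp hw] := fpos_spec o.
  rewrite [prefix m.+1 (shift_in j g)]prefixS qfin_cons.
  by rewrite (fock_some q (conj wp hw) (ltnW hm : (fpos j b < m.+1)%N)).
apply: (cvgc_uniq h1); apply: (cvgc_ev (cvgc_const 0)); exists 0%N => m _.
rewrite [prefix m.+1 (shift_in j g)]prefixS qfin_cons.
rewrite fock_none // => k _; apply/negP => /eqP h; apply: no; by exists k; rewrite h.
Qed.


Lemma vec_orth (x : H) : (forall y, ip x y = 0) -> x = 0.
Proof. by move=> h; apply: hinner_def; apply: h. Qed.

Lemma S'_lin j : hadd (S' j).
Proof.
move=> a x y; apply/eqP; rewrite -subr_eq0; apply/eqP; apply: vec_orth => z.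
by rewrite ipBl ipDl ipZl (hS'_adj j (a *: x + y) z) (hS'_adj j x z) (hS'_adj j y z) ipDl ipZl subrr.
Qed.

Lemma S_add j : hadd (S j).
Proof. exact: hS_lin. Qed.

Lemma adj2 j x y : ip (S j x) y = ip x (S' j y).
Proof. by rewrite ipC -hS'_adj -ipC. Qed.

Lemma S'_e j b : P b ->
  S' j (e b) = match adj1 q j b with Some (c, w) => c *: e w | None => 0 end.
Proof.
move=> Pb; apply/eqP; rewrite -subr_eq0; apply/eqP.
apply: (dense_orth he_dense) => g Pg.
have Pjg := te_shift_in j Pg.
rewrite ipBl hS'_adj hS_e // (he_inner Pjg Pb).
rewrite (Qstep j Pg Pb) /adj1.
case: excluded_middle_informative => _; last by rewrite ip0l; exact: subrr.
have Pw := te_del (fpos j b) Pb.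
by rewrite ipZl (he_inner Pg Pw); exact: subrr.
Qed.

Lemma S'_e_shift j b : P b -> S' j (e (shift_in j b)) = e b.
Proof.
move=> Pb; rewrite (S'_e j (te_shift_in j Pb)) /adj1.
have hf : isfirst j (shift_in j b) 0 by split => // k.
have [o f0] := isfirst_fpos hf.
case: excluded_middle_informative => // _.
rewrite /coef f0 big_ord0 scale1r.
by have -> : del 0 (shift_in j b) = b by apply: functional_extensionality.
Qed.

Lemma S_bound j : exists C : R, 0 <= C /\ forall x, n (S j x) <= C * n x.
Proof.
have [c hc] := hS_bd j; exists `|c|; split; first exact: normr_ge0.
move=> x.
apply: (le_trans (hc x)); rewrite ler_wpM2r ?n_ge0 //; exact: ler_norm.
Qed.

Lemma S'_bound j : exists C : R, 0 <= C /\ forall x, n (S' j x) <= C * n x.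
Proof.
have [C [C0 hC]] := S_bound j; exists C; split => // x.
have h := CS x (S j (S' j x)).
rewrite -hS'_adj ip_self cm_real ?n_ge0 // in h.
have [z|nz] := eqVneq (n (S' j x)) 0; first by rewrite z mulr_ge0 ?n_ge0.
have np : 0 < n (S' j x) by rewrite lt_def nz n_ge0.
have h2 := le_trans h (ler_wpM2l (n_ge0 x) (hC (S' j x))).
by rewrite expr2 mulrCA mulrA ler_pM2r // mulrC in h2.
Qed.

Lemma S'S j x : S' j (S j x) = x.
Proof.
have [C [C0 hC]] := S_bound j; have [C' [C'0 hC']] := S'_bound j.
pose A y := S' j (S j y) - y.
have hA : hadd A.
  by move=> a y z; rewrite /A S_add S'_lin scalerBr; rewrite addrACA opprD.
have hb : forall y, n (A y) <= (2 * (C' * C) + 2) * n y.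
  move=> y; rewrite /A; apply: (le_trans (nD _ _)); rewrite nN.
  rewrite [X in _ <= X]mulrDl; apply: lerD => //; rewrite -mulrA ler_wpM2l //.
  apply: (le_trans (hC' _)); rewrite -mulrA ler_wpM2l //.
have hv : forall b, P b -> A (e b) = 0.
  by move=> b Pb; rewrite /A hS_e // S'_e_shift // subrr.
have := dense_bounded0 he_dense hA hb hv x.
by rewrite /A => /eqP; rewrite subr_eq0 => /eqP.
Qed.


Definition Sstar (g : seq 'I_d) (x : H) : H := foldl (fun y j => S' j y) x g.
Definition Sg (g : seq 'I_d) (x : H) : H := foldr (fun j y => S j y) x g.

Lemma Sstar_adj g : forall x y, ip (Sstar g x) y = ip x (Sg g y).
Proof. by elim: g => [|j g IH] x y //=; rewrite IH hS'_adj. Qed.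

Lemma Sg_adj g x y : ip (Sg g x) y = ip x (Sstar g y).
Proof. by rewrite ipC -Sstar_adj -ipC. Qed.

Lemma SstarSg g : forall y, Sstar g (Sg g y) = y.
Proof. by elim: g => [|j g IH] y //=; rewrite S'S IH. Qed.

Lemma Sstar_lin g : hadd (Sstar g).
Proof.
elim: g => [|j g IH] a x y //=.
by rewrite S'_lin IH.
Qed.

Lemma Sg_lin g : hadd (Sg g).
Proof.
elim: g => [|j g IH] a x y //=.
by rewrite IH S_add.
Qed.

Lemma Sstar_rcons g j x : Sstar (rcons g j) x = S' j (Sstar g x).
Proof. by rewrite /Sstar foldl_rcons. Qed.

Lemma prefix_rcons m (b : iw) : prefix m.+1 b = rcons (prefix m b) (b m).
Proof. exact: mkseqS. Qed.

Lemma Sg_prefix_shn m : forall b, P b -> Sg (prefix m b) (e (shn m b)) = e b.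
Proof.
elim: m => [|m IH] b Pb.
  by have -> : shn 0 b = b by apply: functional_extensionality.
rewrite prefixS /= (IH (sh1 b)); last exact: (te_shn 1 Pb).
rewrite hS_e; last exact: (te_shn 1 Pb).
have -> // : shift_in (b 0%N) (sh1 b) = b.
by apply: functional_extensionality => -[|k].
Qed.

Lemma Sstar_self m b : P b -> Sstar (prefix m b) (e b) = e (shn m b).
Proof. by move=> Pb; rewrite -{1}(Sg_prefix_shn m Pb) SstarSg. Qed.

Lemma Sstar_e_st b g m : P g ->
  (forall c w, st q b g m = Some (c, w) -> P w) /\
  Sstar (prefix m b) (e g) = match st q b g m with Some (c, w) => c *: e w | None => 0 end.
Proof.
move=> Pg; elim: m => [|m [IH1 IH2]].
  by split => [c w [_ <-]|] //=; rewrite scale1r.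
have -> : st q b g m.+1 = match st q b g m with
             | Some (c, w) => match adj1 q (b m) w with
                              | Some (c', w') => Some (c * c', w')
                              | None => None end
             | None => None end by [].
rewrite prefix_rcons Sstar_rcons IH2.
move: IH1; case: (st q b g m) => [[c w]|] IH1; last first.
  by split => // ; rewrite hadd0 //; exact: S'_lin.
have Pw := IH1 c w erefl.
rewrite haddZ; last exact: S'_lin.
rewrite (S'_e _ Pw).
move: (te_del (fpos (b m) w) Pw); rewrite /adj1.
case: excluded_middle_informative => _ Pw'; last by rewrite scaler0.
by split => [c0 w0 [_ <-]|] //; rewrite scalerA.
Qed.

Lemma n_Sstar_e b g m : P g -> n (Sstar (prefix m b) (e g)) = cm (cf q b g m) ^+ 2.
Proof.
move=> Pg; have [h1 h2] := Sstar_e_st b m Pg; rewrite h2 /cf.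
move: h1; case: (st q b g m) => [[c w]|] h1.
  by rewrite nZ n_e ?mulr1 //; exact: (h1 c w erefl).
by rewrite n0 cm0 expr0n.
Qed.


Hypothesis hq_norm : forall i j : 'I_d, i != j -> `|q i j| < 1.

Definition null (u : nat -> H) := forall eps : R, 0 < eps -> exists N, forall m, (N <= m)%N -> n (u m) < eps.

Lemma null_add u v : null u -> null v -> null (fun m => u m + v m).
Proof.
move=> hu hv eps e0; have e4 : 0 < eps / 4 by rewrite divr_gt0.
have [N1 h1] := hu _ e4; have [N2 h2] := hv _ e4.
exists (N1 + N2)%N => m hm; apply: (le_lt_trans (nD _ _)).
have a1 := h1 m (leq_trans (leq_addr _ _) hm); have a2 := h2 m (leq_trans (leq_addl _ _) hm).
lra.
Qed.

Lemma null_scale u c : null u -> null (fun m => c *: u m).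
Proof.
move=> hu eps e0; have cp : 0 < cm c ^+ 2 + 1 by rewrite ltr_pwDr // exprn_ge0 // cm_ge0.
have [N hN] := hu _ (divr_gt0 e0 cp); exists N => m hm; rewrite nZ.
have := hN m hm; rewrite ltr_pdivlMr // => h.
apply: (le_lt_trans _ h); rewrite mulrC ler_wpM2l ?n_ge0 // lerDl //.
Qed.

Lemma null_sum m0 (f : 'I_m0 -> nat -> H) : (forall k, null (f k)) ->
  null (fun m => \sum_(k < m0) f k m).
Proof.
elim: m0 f => [|m0 IH] f hf.
  by move=> eps e0; exists 0%N => m _; rewrite big_ord0 n0.
have h := null_add (IH (fun k => f (widen_ord (leqnSn m0) k)) (fun k => hf _)) (hf ord_max).
move=> eps e0; have [N hN] := h eps e0; exists N => m hm.
by rewrite big_ord_recr /=; apply: hN.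
Qed.

Section Fixb.
Variable beta : iw.
Hypothesis Pbeta : P beta.

Local Notation pm m := (prefix m beta).
Definition T m x := Sg (pm m) (Sstar (pm m) x).
Definition kap x := ip x (e beta).
Definition D x := x - kap x *: e beta.

Lemma T_lin m : hadd (T m).
Proof. by move=> a x y; rewrite /T Sstar_lin Sg_lin. Qed.

Lemma D_lin : hadd D.
Proof.
move=> a x y; rewrite /D /kap ipDl ipZl scalerDl -scalerA scalerBr.
by rewrite opprD addrACA.
Qed.

Lemma T_e m : T m (e beta) = e beta.
Proof. by rewrite /T Sstar_self // Sg_prefix_shn. Qed.

Lemma n_T m x : n (T m x) = n (Sstar (pm m) x).
Proof.
apply: complexI; rewrite -!ip_self /T Sg_adj SstarSg //.
Qed.

Lemma n_Sstar_le m x : n (Sstar (pm m) x) <= n x.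
Proof.
have h := CS x (T m x).
have e1 : ip x (T m x) = (n (Sstar (pm m) x))%:C by rewrite /T -Sstar_adj ip_self.
rewrite e1 cm_real ?n_ge0 // n_T in h.
have [z|nz] := eqVneq (n (Sstar (pm m) x)) 0; first by rewrite z n_ge0.
have np : 0 < n (Sstar (pm m) x) by rewrite lt_def nz n_ge0.
by rewrite expr2 ler_pM2r // in h.
Qed.

Lemma n_D x : n (D x) <= 4 * n x.
Proof.
rewrite /D; apply: (le_trans (nD _ _)); rewrite nN nZ n_e // mulr1.
have := CS x (e beta); rewrite n_e // mulr1 -/(kap x) => h.
lra.
Qed.

Lemma TD_e m x : T m x - kap x *: e beta = T m (D x).
Proof. by rewrite /D (haddB _ _ (T_lin m)) (haddZ _ _ (T_lin m)) T_e. Qed.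



Definition rq : R := \big[Order.max/0]_(p : 'I_d * 'I_d | p.1 != p.2) cm (q p.1 p.2).

Lemma rq_ge0 : 0 <= rq.
Proof.
rewrite /rq; elim/big_rec: _ => // i v _ h.
by rewrite le_max h orbT.
Qed.

Lemma rq_lt1 : rq < 1.
Proof.
rewrite /rq; apply/bigmax_ltP; split; first exact: ltr01.
move=> [i j] /= hij; rewrite -ltc_cm; exact: hq_norm.
Qed.

Lemma rq_bound i j : i != j -> cm (q i j) <= rq.
Proof.
move=> hij; rewrite /rq.
exact: (@le_bigmax_cond _ _ _ (0 : R) (i, j) (fun p : 'I_d * 'I_d => p.1 != p.2) (fun p : 'I_d * 'I_d => cm (q p.1 p.2)) hij).
Qed.

Lemma null_e g : P g -> null (fun m => T m (D (e g))).
Proof.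
move=> Pg eps e0.
have hc := qinf_cvgc (hQ Pbeta Pg).
have [N hN] := main_cf rq_ge0 rq_lt1 rq_bound hc e0.
exists N => m hm; rewrite n_T /D.
rewrite (haddB _ _ (Sstar_lin _)) (haddZ _ _ (Sstar_lin _)).
set u := Sstar (pm m) (e g); set v := Sstar (pm m) (e beta).
have huv : ip u v = kap (e g).
  by rewrite /u Sstar_adj /kap; congr (ip _ _); exact: (T_e m).
have hvv : ip v v = 1.
  by rewrite /v Sstar_self // ip_self n_e //; exact: te_shn.
have huu : ip u u = (cm (cf q beta g m) ^+ 2)%:C.
  by rewrite ip_self /u n_Sstar_e.
have hk : kap (e g) = Q beta g by rewrite /kap he_inner.
have e1 : (n (u - kap (e g) *: v))%:C = (cm (cf q beta g m) ^+ 2 - cm (Q beta g) ^+ 2)%:C.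
  rewrite -ip_self ipBl !ipBr !ipZl !ipZr huv hvv huu (ipC v u) huv hk.
  rewrite rmorphB /= !cm_sq !conjE.
  ring.
have := hN m hm; rewrite (complexI e1); lra.
Qed.

Lemma conv_all x : hconverges (fun m => T m x) (kap x *: e beta).
Proof.
move=> eps e0.
have e16 : 0 < eps / 16 by rewrite divr_gt0.
have [k [c [b [Pb hz]]]] := he_dense x e16.
set z := \sum_(i < k) c i *: e (b i) in hz.
have eqz : forall m, T m (D z) = \sum_(i < k) c i *: T m (D (e (b i))).
  move=> m; rewrite /z (hadd_sum _ D_lin) (hadd_sum _ (T_lin m)).
  apply: eq_bigr => i _; by rewrite (haddZ _ _ D_lin) (haddZ _ _ (T_lin m)).
have hnz : null (fun m => T m (D z)).
  have h := @null_sum k (fun (i : 'I_k) (m : nat) => c i *: T m (D (e (b i))))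
    (fun i => null_scale (c i) (null_e (Pb i))).
  move=> eps' e'; have [N hN] := h eps' e'; exists N => m hm; rewrite eqz; exact: hN.
have e4 : 0 < eps / 4 by rewrite divr_gt0.
have [N hN] := hnz _ e4.
exists N => m hm; rewrite TD_e.
have -> : D x = D (x - z) + D z by rewrite -(haddD _ _ D_lin) subrK.
rewrite (haddD _ _ (T_lin m)).
apply: (le_lt_trans (nD _ _)).
have h1 : n (T m (D (x - z))) <= 4 * n (x - z).
  by rewrite n_T; apply: (le_trans (n_Sstar_le _ _)); exact: n_D.
have h2 := hN m hm.
lra.
Qed.

End Fixb.

Lemma M_Sg (M : H -> Prop) g x : (forall j x, M x -> M (S j x) /\ M (S' j x)) ->
  M x -> M (Sg g x).
Proof. by move=> inv; elim: g => [|j g IH] //= Mx; apply: (proj1 (inv _ _ (IH Mx))). Qed.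

Lemma M_Sstar (M : H -> Prop) g : (forall j x, M x -> M (S j x) /\ M (S' j x)) ->
  forall x, M x -> M (Sstar g x).
Proof. by move=> inv; elim: g => [|j g IH] x //= Mx; apply: IH; exact: (proj2 (inv _ _ Mx)). Qed.

Lemma irred (M : H -> Prop) : closed_subspace M ->
  (forall j x, M x -> M (S j x) /\ M (S' j x)) ->
  (forall x, M x -> x = 0) \/ (forall x, M x).
Proof.
move=> cM inv.
case: (classic (exists x, M x /\ x <> 0)) => [[x [Mx nx]]|h]; last first.
  left => x Mx; apply: NNPP => nx; apply: h; by exists x.
right.
have [beta [Pb nk]] : exists beta, P beta /\ ip x (e beta) <> 0.
  apply: NNPP => hh; apply: nx; apply: (dense_orth he_dense) => b Pb.
  by apply: NNPP => hb; apply: hh; exists b.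
have Mk : M (kap beta x *: e beta).
  case: cM => _ _ cl; apply: (cl (fun m => T beta m x)); last exact: conv_all.
  by move=> m; apply: M_Sg => //; apply: M_Sstar.
have Meb : M (e beta).
  case: cM => M0 Ml _.
  have := Ml (kap beta x)^-1 _ _ Mk M0.
  by rewrite addr0 scalerA mulVf ?scale1r //; apply/eqP.
have Mall : forall g, P g -> M (e g).
  move=> g Pg; case: (Pg) => m1 [n1 h1]; case: (Pb) => m2 [n2 h2].
  have esh : shn (m1 + n2) g = shn (m2 + n1) beta.
    apply: functional_extensionality => i; rewrite /shn.
    have -> : (m1 + n2 + i = (n2 + i) + m1)%N by lia.
    have -> : (m2 + n1 + i = (n1 + i) + m2)%N by lia.
    by rewrite h1 h2; congr alpha; lia.
  rewrite -(Sg_prefix_shn (m1 + n2) Pg) esh -(Sstar_self (m2 + n1) Pb).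
  by apply: M_Sg => //; apply: M_Sstar.
exact: (closed_all he_dense cM Mall).
Qed.

End Main.

Theorem mainTheorem4
  (R : realType) (d : nat) (hd : (2 <= d)%N)
  (q : 'I_d -> 'I_d -> R[i])
  (hq_norm : forall i j : 'I_d, i != j -> `|q i j| < 1)
  (hq_conj : forall i j : 'I_d, i != j -> q i j = (q j i)^*)
  (alpha : iword d)
  (Q : iword d -> iword d -> R[i])
  (hQ : forall g b : iword d, tail_equiv g alpha -> tail_equiv b alpha ->
          qinf_is q g b (Q g b))
  (H : hilbert R) (e : iword d -> H)
  (he_inner : forall g b : iword d, tail_equiv g alpha -> tail_equiv b alpha ->
          hinner (e b) (e g) = Q g b)
  (he_dense : dense_span (fun b => tail_equiv b alpha) e)
  (S S' : 'I_d -> H -> H)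
  (hS_lin : forall j, hlinear (S j)) (hS_bd : forall j, hbounded (S j))
  (hS_e : forall j (b : iword d), tail_equiv b alpha -> S j (e b) = e (shift_in j b))
  (hS'_adj : forall j (x y : H), hinner (S' j x) y = hinner x (S j y)) :
  forall M : H -> Prop, closed_subspace M ->
    (forall j (x : H), M x -> M (S j x) /\ M (S' j x)) ->
    (forall x : H, M x -> x = 0) \/ (forall x : H, M x).
Proof.
move=> M cM inv.
exact: (irred hQ he_inner he_dense hS_lin hS_bd hS_e hS'_adj hq_norm cM inv).
Qed.
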